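(* Let $a>0$, $b>0$, let $p\in\mathbb{N}$, and let $\alpha,\beta,t$ be real numbers with $\alpha+\beta t>1$. Then \[ a\gamma + b\ln p + a\psi(\alpha+\beta t) - b\psi_p(\alpha+\beta t) > 0 . \]
   Context: $\gamma$ denotes the Euler–Mascheroni constant and $\psi(t)=\Gamma'(t)/\Gamma(t)$ is the digamma function for $t>0$, where $\Gamma$ is Euler's Gamma function. For $p\in\mathbb{N}$ and $t>0$, the $p$-Gamma function is $\Gamma_p(t)=\frac{p!\,p^t}{t(t+1)\cdots(t+p)}$, and $\psi_p(t)=\frac{d}{dt}\ln\Gamma_p(t)=\Gamma_p'(t)/\Gamma_p(t)$. *)

(* Defs.v *)
From Stdlib Require Import Reals Rprod Factorial.
From Coquelicot Require Import Coquelicot.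
Open Scope R_scope.

Definition euler_gamma : R :=
  real (Lim_seq (fun n => sum_f_R0 (fun k => / INR (S k)) n - ln (INR (S n)))).

Definition Gamma_p (p : nat) (t : R) : R :=
  INR (Factorial.fact p) * Rpower (INR p) t / prod_f_R0 (fun k => t + INR k) p.

(* Euler's Gamma function on t > 0, via Gauss' limit Gamma(t) = lim_p Gamma_p(t). *)
Definition Gamma (t : R) : R := real (Lim_seq (fun p => Gamma_p p t)).

Definition digamma (t : R) : R := Derive Gamma t / Gamma t.

Definition psi_p (p : nat) (t : R) : R := Derive (fun s => ln (Gamma_p p s)) t.

(* Main.v *)
Require Import Defs.
From Stdlib Require Import Reals Lra Lia.
From Coquelicot Require Import Coquelicot.
Open Scope R_scope.

Lemma ln_le_x1 z : 0 < z -> ln z <= z - 1.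
Proof.
  intro Hz. pose proof (exp_ineq1_le (z - 1)).
  rewrite <- (ln_exp (z-1)). apply ln_le; lra.
Qed.

Lemma lnle a b : 0 < a -> 0 < b -> ln a - ln b <= (a - b) / b.
Proof.
  intros Ha Hb. rewrite <- ln_div by lra.
  replace ((a-b)/b) with (a/b - 1) by (field; lra).
  apply ln_le_x1. apply Rdiv_lt_0_compat; lra.
Qed.

Lemma lnge a b : 0 < a -> 0 < b -> (a - b) / a <= ln a - ln b.
Proof.
  intros Ha Hb. pose proof (lnle b a Hb Ha).
  replace ((a-b)/a) with (- ((b-a)/a)) by (field; lra). lra.
Qed.

Lemma exp_le' x y : x <= y -> exp x <= exp y.
Proof.
  intro H. destruct (Rle_lt_or_eq_dec _ _ H) as [H'|H'].
  - left. apply exp_increasing; auto.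
  - subst; lra.
Qed.

Definition Lpf (p : nat) (y : R) : R :=
  ln (INR (Factorial.fact p)) + y * ln (INR p) - sum_f_R0 (fun k => ln (y + INR k)) p.

Lemma prod_exp y p : 0 < y ->
  prod_f_R0 (fun k => y + INR k) p = exp (sum_f_R0 (fun k => ln (y + INR k)) p).
Proof.
  intro Hy. induction p as [|p IH].
  - simpl. rewrite exp_ln; lra.
  - change (prod_f_R0 (fun k => y + INR k) p * (y + INR (S p)) =
      exp (sum_f_R0 (fun k => ln (y + INR k)) p + ln (y + INR (S p)))).
    rewrite IH, exp_plus, exp_ln; auto.
    pose proof (pos_INR (S p)). lra.
Qed.

Lemma Gp_exp p y : (1 <= p)%nat -> 0 < y -> Gamma_p p y = exp (Lpf p y).
Proof.
  intros Hp Hy. unfold Gamma_p, Lpf, Rpower.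
  rewrite prod_exp by auto.
  assert (Hf : 0 < INR (Factorial.fact p)) by (apply lt_0_INR, Factorial.lt_O_fact).
  unfold Rminus. rewrite !exp_plus, exp_Ropp, exp_ln by auto.
  unfold Rdiv. ring.
Qed.
Lemma Lpf_succ p y : (1 <= p)%nat ->
  Lpf (S p) y = Lpf p y + ln (INR (S p)) + y * (ln (INR (S p)) - ln (INR p))
     - ln (y + INR (S p)).
Proof.
  intro Hp. unfold Lpf. rewrite fact_simpl, mult_INR, ln_mult.
  - change (sum_f_R0 (fun k => ln (y + INR k)) (S p)) with
      (sum_f_R0 (fun k => ln (y + INR k)) p + ln (y + INR (S p))). ring.
  - apply lt_0_INR; lia.
  - apply lt_0_INR, Factorial.lt_O_fact.
Qed.

Lemma Lpf_mono p y : (1 <= p)%nat -> 0 < y -> Lpf p y <= Lpf (S p) y.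
Proof.
  intros Hp Hy. rewrite Lpf_succ by auto.
  assert (Hq : 1 <= INR p) by (apply (le_INR 1); auto). rewrite S_INR.
  pose proof (lnle (y + (INR p + 1)) (INR p + 1) ltac:(lra) ltac:(lra)) as H1.
  pose proof (lnge (INR p + 1) (INR p) ltac:(lra) ltac:(lra)) as H2.
  replace (y + (INR p + 1) - (INR p + 1)) with y in H1 by ring.
  replace (INR p + 1 - INR p) with 1 in H2 by ring.
  assert (H3 : y * (1 / (INR p + 1)) <= y * (ln (INR p + 1) - ln (INR p)))
    by (apply Rmult_le_compat_l; lra).
  replace (y * (1 / (INR p + 1))) with (y / (INR p + 1)) in H3 by (field; lra).
  lra.
Qed.

Lemma Lpf_bnd_step p y : (1 <= p)%nat -> 0 < y ->
  Lpf (S p) y - Lpf p y <= y * (y + 1) * (/ INR p - / INR (S p)).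
Proof.
  intros Hp Hy. rewrite Lpf_succ by auto.
  assert (Hq : 1 <= INR p) by (apply (le_INR 1); auto). rewrite S_INR.
  set (q := INR p) in *.
  pose proof (lnge (y + (q + 1)) (q + 1) ltac:(lra) ltac:(lra)) as H1.
  pose proof (lnle (q + 1) q ltac:(lra) ltac:(lra)) as H2.
  replace (y + (q + 1) - (q + 1)) with y in H1 by ring.
  replace (q + 1 - q) with 1 in H2 by ring.
  assert (H3 : y * (ln (q + 1) - ln q) <= y * (1 / q))
    by (apply Rmult_le_compat_l; lra).
  assert (H4 : y * (1 / q) - y / (y + (q + 1)) <= y * (y + 1) * (/ q - / (q + 1))).
  { replace (y * (1 / q) - y / (y + (q + 1))) with (y * (y+1) * / (q * (y + q + 1)))
      by (field; lra).
    replace (/ q - / (q + 1)) with (/ (q * (q + 1))) by (field; lra).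
    apply Rmult_le_compat_l. nra.
    apply Rinv_le_contravar. nra. nra. }
  lra.
Qed.

Lemma Lpf_bnd n y : 0 < y ->
  Lpf (S n) y + y * (y + 1) / INR (S n) <= Lpf 1 y + y * (y + 1).
Proof.
  intro Hy. induction n as [|n IH].
  - simpl INR. replace (0 + 1) with 1 by ring. lra.
  - pose proof (Lpf_bnd_step (S n) y ltac:(lia) Hy).
    unfold Rdiv in *. lra.
Qed.

Lemma Gamma_lim y : 0 < y -> is_lim_seq (fun p => Gamma_p p y) (Gamma y) /\ 0 < Gamma y.
Proof.
  intro Hy.
  set (v := fun n => Gamma_p (S n) y).
  assert (Hinc : forall n, v n <= v (S n)).
  { intro n. unfold v. rewrite !Gp_exp by (auto; lia). apply exp_le', Lpf_mono; auto; lia. }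
  assert (Hb : forall n, v n <= exp (Lpf 1 y + y * (y + 1))).
  { intro n. unfold v. rewrite Gp_exp by (auto; lia). apply exp_le'.
    pose proof (Lpf_bnd n y Hy).
    assert (0 <= y * (y + 1) / INR (S n)).
    { apply Rdiv_le_0_compat. nra. apply lt_0_INR; lia. }
    lra. }
  destruct (ex_finite_lim_seq_incr v _ Hinc Hb) as [l Hl].
  assert (Hu : is_lim_seq (fun p => Gamma_p p y) l) by (apply is_lim_seq_incr_1; exact Hl).
  assert (HG : Gamma y = l).
  { unfold Gamma. rewrite (is_lim_seq_unique _ _ Hu). reflexivity. }
  rewrite HG. split; auto.
  assert (Hv0 : 0 < v 0%nat).
  { unfold v. rewrite Gp_exp by (auto; lia). apply exp_pos. }
  assert (Rbar_le (v 0%nat) l).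
  { apply (is_lim_seq_le_loc (fun _ => v 0%nat) v); [|apply is_lim_seq_const|exact Hl].
    exists 0%nat. intros n _. induction n; [lra|]. pose proof (Hinc n). lra. }
  simpl in H. lra.
Qed.

Definition Hs (n : nat) : R := sum_f_R0 (fun k => / INR (S k)) n.

Lemma Hs_S n : Hs (S n) = Hs n + / INR (S (S n)).
Proof. reflexivity. Qed.

Lemma Hs_ge n : ln (INR (S (S n))) <= Hs n.
Proof.
  induction n as [|n IH].
  - unfold Hs. simpl sum_f_R0. pose proof (ln_le_x1 2 ltac:(lra)).
    replace (INR 2) with 2 by (simpl; ring). replace (INR 1) with 1 by (simpl; ring). lra.
  - rewrite Hs_S.
    assert (Hq : 0 < INR (S (S n))) by (apply lt_0_INR; lia).
    pose proof (lnle (INR (S (S (S n)))) (INR (S (S n))) ltac:(apply lt_0_INR; lia) Hq).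
    replace (INR (S (S (S n))) - INR (S (S n))) with 1 in H by (rewrite (S_INR (S (S n))); ring).
    unfold Rdiv in H. lra.
Qed.

Definition eseq (n : nat) : R := Hs n - ln (INR (S n)).

Lemma eseq_pos n : 0 <= eseq n.
Proof.
  unfold eseq. pose proof (Hs_ge n).
  assert (ln (INR (S n)) <= ln (INR (S (S n)))).
  { apply ln_le. apply lt_0_INR; lia. apply le_INR; lia. }
  lra.
Qed.

Lemma eseq_dec n : eseq (S n) <= eseq n.
Proof.
  unfold eseq. rewrite Hs_S.
  pose proof (lnge (INR (S (S n))) (INR (S n)) ltac:(apply lt_0_INR; lia) ltac:(apply lt_0_INR; lia)).
  replace (INR (S (S n)) - INR (S n)) with 1 in H by (rewrite (S_INR (S n)); ring).
  unfold Rdiv in H. lra.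
Qed.

Lemma euler_lim : is_lim_seq eseq euler_gamma /\ 0 <= euler_gamma.
Proof.
  destruct (ex_finite_lim_seq_decr eseq 0 eseq_dec eseq_pos) as [l Hl].
  assert (HE : euler_gamma = l).
  { assert (Hl' : is_lim_seq (fun n => sum_f_R0 (fun k => / INR (S k)) n - ln (INR (S n))) l) by exact Hl.
    unfold euler_gamma. rewrite (is_lim_seq_unique _ l Hl'). reflexivity. }
  rewrite HE. split; auto.
  assert (Rbar_le 0 l).
  { apply (is_lim_seq_le_loc (fun _ => 0) eseq); [|apply is_lim_seq_const|exact Hl].
    exists 0%nat. intros n _. apply eseq_pos. }
  simpl in H. lra.
Qed.

Definition fseq (n : nat) : R := Hs n - ln (INR n).

Lemma fseq_lim : is_lim_seq fseq euler_gamma.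
Proof.
  destruct euler_lim as [He _].
  assert (Hd : is_lim_seq (fun n => ln (INR (S n)) - ln (INR n)) 0).
  { apply (is_lim_seq_le_le_loc (fun _ => 0) _ (fun n => / INR n)).
    - exists 1%nat. intros n Hn.
      assert (Hq : 1 <= INR n) by (apply (le_INR 1); auto).
      rewrite S_INR. split.
      + assert (ln (INR n) <= ln (INR n + 1)) by (apply ln_le; lra). lra.
      + pose proof (lnle (INR n + 1) (INR n) ltac:(lra) ltac:(lra)).
        replace (INR n + 1 - INR n) with 1 in H by ring. unfold Rdiv in H. lra.
    - apply is_lim_seq_const.
    - replace (Finite 0) with (Rbar_inv p_infty) by reflexivity.
      apply is_lim_seq_inv. apply is_lim_seq_INR. discriminate. }
  pose proof (is_lim_seq_plus' _ _ _ _ He Hd) as Hs'.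
  replace (euler_gamma + 0) with euler_gamma in Hs' by ring.
  apply is_lim_seq_ext with (2 := Hs'). intro n. unfold eseq, fseq. ring.
Qed.

Lemma sum_diff_le x h p : 1 <= x -> 0 < h ->
  sum_f_R0 (fun k => ln (x + h + INR k)) p - sum_f_R0 (fun k => ln (x + INR k)) p
  <= h * Hs p.
Proof.
  intros Hx Hh.
  assert (Hk : forall k, ln (x + h + INR k) - ln (x + INR k) <= h * / INR (S k)).
  { intro k. pose proof (pos_INR k).
    pose proof (lnle (x + h + INR k) (x + INR k) ltac:(lra) ltac:(lra)).
    replace (x + h + INR k - (x + INR k)) with h in H0 by ring.
    rewrite S_INR. unfold Rdiv in H0.
    assert (/ (x + INR k) <= / (INR k + 1)) by (apply Rinv_le_contravar; lra).
    assert (h * / (x + INR k) <= h * / (INR k + 1)) by (apply Rmult_le_compat_l; lra).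
    lra. }
  induction p as [|p IH].
  - exact (Hk 0%nat).
  - rewrite Hs_S.
    change (sum_f_R0 (fun k => ln (x + h + INR k)) p + ln (x + h + INR (S p))
      - (sum_f_R0 (fun k => ln (x + INR k)) p + ln (x + INR (S p)))
      <= h * (Hs p + / INR (S (S p)))).
    pose proof (Hk (S p)). lra.
Qed.

Lemma Gp_shift p x h : (1 <= p)%nat -> 1 <= x -> 0 < h ->
  Gamma_p p x * exp (- h * fseq p) <= Gamma_p p (x + h).
Proof.
  intros Hp Hx Hh. rewrite !Gp_exp by (auto; lra).
  rewrite <- exp_plus. apply exp_le'. unfold Lpf, fseq.
  pose proof (sum_diff_le x h p Hx Hh). nra.
Qed.

Lemma sum_ln_derive p x : 0 < x ->
  is_derive (fun t => sum_f_R0 (fun k => ln (t + INR k)) p) x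
            (sum_f_R0 (fun k => / (x + INR k)) p).
Proof.
  intro Hx. induction p as [|p IH].
  - simpl. auto_derive. lra. field. lra.
  - change (is_derive (fun t => sum_f_R0 (fun k => ln (t + INR k)) p + ln (t + INR (S p))) x
      (sum_f_R0 (fun k => / (x + INR k)) p + / (x + INR (S p)))).
    apply (is_derive_plus (fun t => sum_f_R0 (fun k => ln (t + INR k)) p)
             (fun t => ln (t + INR (S p)))); auto.
    pose proof (pos_INR (S p)). set (c := INR (S p)) in *.
    auto_derive. lra. field. lra.
Qed.

Lemma psi_p_eq p x : (1 <= p)%nat -> 0 < x ->
  psi_p p x = ln (INR p) - sum_f_R0 (fun k => / (x + INR k)) p.
Proof.
  intros Hp Hx. unfold psi_p.
  rewrite (Derive_ext_loc _ (Lpf p)).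
  - apply is_derive_unique. unfold Lpf.
    pose proof (sum_ln_derive p x Hx) as HS.
    assert (H1 : is_derive (fun t => ln (INR (Factorial.fact p)) + t * ln (INR p)) x (ln (INR p))).
    { auto_derive. auto. ring. }
    apply (is_derive_minus _ _ _ _ _ H1 HS).
  - apply (locally_interval _ x 0 p_infty); simpl; auto.
    intros y Hy _. rewrite Gp_exp by auto. apply ln_exp.
Qed.

Lemma Gamma_shift x h : 1 <= x -> 0 < h ->
  Gamma x * exp (- h * euler_gamma) <= Gamma (x + h).
Proof.
  intros Hx Hh.
  destruct (Gamma_lim x ltac:(lra)) as [H1 _].
  destruct (Gamma_lim (x + h) ltac:(lra)) as [H2 _].
  assert (H3 : is_lim_seq (fun p => - h * fseq p) (- h * euler_gamma)).
  { apply is_lim_seq_mult'. apply is_lim_seq_const. apply fseq_lim. }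
  assert (H4 : is_lim_seq (fun p => exp (- h * fseq p)) (exp (- h * euler_gamma))).
  { apply (is_lim_seq_continuous exp (fun p => - h * fseq p)); auto.
    apply derivable_continuous_pt, derivable_pt_exp. }
  pose proof (is_lim_seq_mult' _ _ _ _ H1 H4) as H5.
  assert (Rbar_le (Gamma x * exp (- h * euler_gamma)) (Gamma (x + h))).
  { refine (is_lim_seq_le_loc _ _ _ _ _ H5 H2).
    exists 1%nat. intros n Hn. apply Gp_shift; auto. }
  simpl in H. exact H.
Qed.

Lemma Derive_bnd x : 1 <= x -> - euler_gamma * Gamma x <= Derive Gamma x.
Proof.
  intro Hx. destruct euler_lim as [_ HE]. destruct (Gamma_lim x ltac:(lra)) as [_ HG].
  assert (Hq : forall h, 0 < h -> - euler_gamma * Gamma x <= (Gamma (x + h) - Gamma x) / h).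
  { intros h Hh. pose proof (Gamma_shift x h Hx Hh).
    pose proof (exp_ineq1_le (- h * euler_gamma)).
    assert (Gamma x * (1 + - h * euler_gamma) <= Gamma x * exp (- h * euler_gamma))
      by (apply Rmult_le_compat_l; lra).
    apply (Rmult_le_reg_r h); auto.
    replace ((Gamma (x + h) - Gamma x) / h * h) with (Gamma (x + h) - Gamma x) by (field; lra).
    nra. }
  unfold Derive, Lim.
  assert (Hl : Rbar_le (Lim_seq (fun _ => - euler_gamma * Gamma x))
    (Lim_seq (fun n => (Gamma (x + Rbar_loc_seq 0 n) - Gamma x) / Rbar_loc_seq 0 n))).
  { apply Lim_seq_le_loc. exists 0%nat. intros n _. apply Hq. simpl.
    pose proof (pos_INR n). rewrite Rplus_0_l. apply Rinv_0_lt_compat. lra. }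
  rewrite Lim_seq_const in Hl.
  destruct (Lim_seq _); simpl in *; try contradiction; nra.
Qed.

Theorem lemma3p2 (a b : R) (p : nat) (alpha beta t : R) :
  0 < a -> 0 < b -> (1 <= p)%nat -> alpha + beta * t > 1 ->
  a * euler_gamma + b * ln (INR p) + a * digamma (alpha + beta * t)
    - b * psi_p p (alpha + beta * t) > 0.
Proof.
  intros Ha Hb Hp Hx. set (x := alpha + beta * t) in *.
  rewrite psi_p_eq by (auto; lra).
  assert (HS : 0 < sum_f_R0 (fun k => / (x + INR k)) p).
  { clear Hp. induction p as [|p IH].
    - simpl. apply Rinv_0_lt_compat. lra.
    - change (0 < sum_f_R0 (fun k => / (x + INR k)) p + / (x + INR (S p))).
      pose proof (pos_INR (S p)).
      assert (0 < / (x + INR (S p))) by (apply Rinv_0_lt_compat; lra). lra. }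
  assert (Hd : - euler_gamma <= digamma x).
  { unfold digamma. destruct (Gamma_lim x ltac:(lra)) as [_ HG].
    pose proof (Derive_bnd x ltac:(lra)).
    apply (Rmult_le_reg_r (Gamma x)); auto.
    replace (Derive Gamma x / Gamma x * Gamma x) with (Derive Gamma x) by (field; lra).
    lra. }
  assert (0 <= a * (euler_gamma + digamma x)) by (apply Rmult_le_pos; lra).
  assert (0 < b * sum_f_R0 (fun k => / (x + INR k)) p) by (apply Rmult_lt_0_compat; lra).
  nra.
Qed.
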